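(* Let $f(1),f(2),\dots$ be a non-negative, non-decreasing sequence of real numbers with $$\sum_{n=1}^{\infty}\frac{f(n)}{n^2}=\infty.$$ Then there exists a sequence $b(1),b(2),\dots$ of rational numbers such that $$b(n+m)\le b(n)+b(m)+f(n+m)\quad\text{for all integers } n,m\ge 1,$$ and such that the map $n\mapsto b(n)/n$ is a bijection from the positive integers onto $\mathbb{Q}$, i.e. every rational number occurs exactly once among the values $b(n)/n$. *)

(* Defs.v *)
From Stdlib Require Export Reals QArith Qreals.

Definition partial_sum_f_over_n2 (f : nat -> R) (N : nat) : R :=
  sum_f_R0 (fun k => (f (S k) / (INR (S k))^2)%R) N.

Definition ratio (b : nat -> Q) (n : nat) : Q :=
  (b n / inject_Z (Z.of_nat n))%Q.

(* Main.v *)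
Require Import Defs.
From Stdlib Require Import Reals QArith Qreals Lra Lia List Cantor ConstructiveEpsilon Qabs IndefiniteDescription Classical.
Open Scope R_scope.

Definition enumQ (n : nat) : Q :=
  let (p, q) := Cantor.of_nat n in
  let (x, y) := Cantor.of_nat p in
  Qmake (Z.of_nat x - Z.of_nat y) (Pos.of_succ_nat q).

Lemma enumQ_surj (q : Q) : exists n, enumQ n = q.
Proof.
  destruct q as [z d].
  exists (Cantor.to_nat (Cantor.to_nat (Z.to_nat z, Z.to_nat (- z)), pred (Pos.to_nat d))).
  unfold enumQ. rewrite !Cantor.cancel_of_to.
  f_equal.
  - lia.
  - apply SuccNat2Pos.inv. pose proof (Pos2Nat.is_pos d). lia.
Qed.

Definition freshb (h : list Q) (q : Q) : bool :=
  negb (existsb (fun y => Qeq_bool q y) h).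

Lemma freshb_spec h q : freshb h q = true -> forall y, In y h -> ~ (q == y)%Q.
Proof.
  unfold freshb. intros H y Hy Hq.
  apply Bool.negb_true_iff in H.
  assert (existsb (fun y => Qeq_bool q y) h = true).
  { apply existsb_exists. exists y. split; auto. apply Qeq_bool_iff; auto. }
  congruence.
Qed.

Lemma freshb_intro h q : (forall y, In y h -> ~ (q == y)%Q) -> freshb h q = true.
Proof.
  intros H. unfold freshb. apply Bool.negb_true_iff.
  destruct (existsb _ h) eqn:E; auto.
  apply existsb_exists in E. destruct E as [y [Hy Hq]].
  apply Qeq_bool_iff in Hq. exfalso; eapply H; eauto.
Qed.

From Stdlib Require Import Lqa.
Fixpoint sabs (h : list Q) : Q := match h with nil => 0%Q | y :: t => (Qabs y + sabs t)%Q end.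

Lemma sabs_nonneg h : (0 <= sabs h)%Q.
Proof. induction h; simpl. apply Qle_refl. pose proof (Qabs_nonneg a). lra. Qed.

Lemma sabs_ge h : forall y, In y h -> (y < sabs h + 1)%Q.
Proof.
  induction h as [|a t IH]; simpl; intros y Hy; [contradiction|].
  pose proof (sabs_nonneg t). pose proof (Qabs_nonneg a).
  destruct Hy as [Hy|Hy].
  - subst. pose proof (Qle_Qabs y). lra.
  - specialize (IH y Hy). lra.
Qed.
From Stdlib Require Import Lra.
Lemma Q_dense a b : a < b -> exists r : Q, a < Q2R r < b.
Proof.
  intros Hab.
  set (k := up (/ (b - a))).
  destruct (archimed (/ (b - a))) as [Hk1 Hk2].
  assert (Hpos : 0 < / (b - a)) by (apply Rinv_0_lt_compat; lra).
  assert (Hk0 : (0 < k)%Z) by (apply lt_IZR; fold k in Hk1; lra).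
  set (m := up (a * IZR k)).
  destruct (archimed (a * IZR k)) as [Hm1 Hm2]. fold m in Hm1, Hm2.
  exists (Qmake m (Z.to_pos k)).
  unfold Q2R; simpl. rewrite Z2Pos.id by lia.
  assert (Hkr : 0 < IZR k) by (apply IZR_lt; lia).
  fold k in Hk1.
  assert (Hkk : 1 < (b - a) * IZR k).
  { apply Rmult_lt_compat_l with (r := b - a) in Hk1; [|lra].
    rewrite Rinv_r in Hk1 by lra. lra. }
  split.
  - apply Rmult_lt_reg_r with (IZR k); auto.
    rewrite Rmult_assoc, Rinv_l by lra. lra.
  - apply Rmult_lt_reg_r with (IZR k); auto.
    rewrite Rmult_assoc, Rinv_l by lra. lra.
Qed.

Fixpoint cmax (a b : R) (h : list Q) : R :=
  match h with
  | nil => a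
  | y :: t => if Rlt_dec (Q2R y) b then Rmax (Q2R y) (cmax a b t) else cmax a b t
  end.

Lemma cmax_lt a b h : a < b -> cmax a b h < b.
Proof.
  intros Hab; induction h as [|y t IH]; simpl; auto.
  destruct Rlt_dec; auto. apply Rmax_lub_lt; auto.
Qed.

Lemma cmax_ge a b h : forall y, In y h -> Q2R y < b -> Q2R y <= cmax a b h.
Proof.
  induction h as [|z t IH]; simpl; intros y Hy Hb; [contradiction|].
  destruct Hy as [Hy|Hy].
  - subst. destruct Rlt_dec; [apply Rmax_l| contradiction].
  - destruct Rlt_dec; auto. eapply Rle_trans; [apply IH; auto| apply Rmax_r].
Qed.

Lemma pick_ex (a b : R) (h : list Q) :
  exists r : Q, a < b -> (a < Q2R r < b /\ freshb h r = true).
Proof.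
  destruct (Rlt_dec a b) as [Hab|Hab]; [|exists 0%Q; intros; contradiction].
  assert (Hc : a <= cmax a b h).
  { clear. induction h; simpl; [lra|]. destruct Rlt_dec; auto.
    eapply Rle_trans; [exact IHh| apply Rmax_r]. }
  destruct (Q_dense (cmax a b h) b (cmax_lt a b h Hab)) as [r [Hr1 Hr2]].
  exists r; intros _. split; [lra|].
  apply freshb_intro. intros y Hy Heq. apply Qeq_eqR in Heq.
  destruct (Rlt_dec (Q2R y) b) as [Hyb|Hyb].
  - pose proof (cmax_ge a b h y Hy Hyb). lra.
  - lra.
Qed.

Definition pick (a b : R) (h : list Q) : Q :=
  proj1_sig (constructive_indefinite_description _ (pick_ex a b h)).

Lemma pick_spec a b h : a < b -> a < Q2R (pick a b h) < b /\ freshb h (pick a b h) = true.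
Proof. unfold pick. destruct constructive_indefinite_description as [r Hr]. simpl. auto. Qed.

Lemma fresh_ex h : exists n, freshb h (enumQ n) = true.
Proof.
  destruct (enumQ_surj (sabs h + 1)%Q) as [n Hn]. exists n. apply freshb_intro.
  intros y Hy Heq. rewrite Hn in Heq. pose proof (sabs_ge h y Hy) as H1. rewrite <- Heq in H1. exact (Qlt_irrefl _ H1).
Qed.

Definition target (h : list Q) : nat :=
  proj1_sig (epsilon_smallest (fun n => freshb h (enumQ n) = true)
     (fun n => Bool.bool_dec (freshb h (enumQ n)) true) (fresh_ex h)).

Lemma target_spec h : freshb h (enumQ (target h)) = true /\
  forall k, freshb h (enumQ k) = true -> (target h <= k)%nat.
Proof. unfold target. destruct epsilon_smallest as [n Hn]. simpl. auto. Qed.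

Fixpoint sumD (D : nat -> R) (n0 k : nat) : R :=
  match k with O => 0 | S k' => sumD D n0 k' + D (n0 + k')%nat end.

Section Walk.
Variable D : nat -> R.
Hypothesis Dpos : forall n, 0 <= D n.
Hypothesis Ddiv : forall n0 M, exists k, M < sumD D n0 k.

Definition next (n : nat) (h : list Q) : Q :=
  let x := hd 0%Q h in let t := enumQ (target h) in
  if Rle_dec (Q2R t) (Q2R x + D n) then t
  else pick (Q2R x + D n - (/2)^n) (Q2R x + D n) h.

Fixpoint Hs (n : nat) : list Q :=
  match n with O => 0%Q :: nil | S k => next k (Hs k) :: Hs k end.

Definition w (n : nat) : Q := hd 0%Q (Hs n).

Lemma half_pow_pos n : 0 < (/2)^n.
Proof. apply pow_lt. lra. Qed.

Lemma w_S n : w (S n) = next n (Hs n).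
Proof. reflexivity. Qed.

Lemma w_step n : Q2R (w (S n)) <= Q2R (w n) + D n.
Proof.
  rewrite w_S. unfold next. fold (w n). destruct Rle_dec as [Hl|Hl]; auto.
  pose proof (half_pow_pos n).
  destruct (pick_spec (Q2R (w n) + D n - (/2)^n) (Q2R (w n) + D n) (Hs n)) as [[_ H2] _]; lra.
Qed.

Lemma w_fresh n : freshb (Hs n) (w (S n)) = true.
Proof.
  rewrite w_S. unfold next. destruct Rle_dec.
  - apply target_spec.
  - pose proof (half_pow_pos n). apply pick_spec. lra.
Qed.

Lemma H_w n m : (m <= n)%nat -> In (w m) (Hs n).
Proof.
  induction n; intros Hm.
  - assert (m = 0)%nat by lia. subst. simpl. auto.
  - destruct (Nat.eq_dec m (S n)). subst. unfold w. destruct (Hs (S n)) eqn:E; simpl in E; [discriminate|].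
    simpl; auto. simpl. right. apply IHn. lia.
Qed.

Lemma H_inv n y : In y (Hs n) -> exists m, (m <= n)%nat /\ y = w m.
Proof.
  induction n; simpl; intros Hy.
  - destruct Hy as [Hy|[]]. exists 0%nat. split; auto.
  - destruct Hy as [Hy|Hy]. exists (S n). split; auto.
    destruct (IHn Hy) as [m [? ?]]. exists m. split; auto.
Qed.

Lemma w_inj n m : (w n == w m)%Q -> n = m.
Proof.
  assert (K : forall n m, (n < m)%nat -> ~ (w n == w m)%Q).
  { intros a c Hac Heq. destruct c as [|c]; [lia|].
    pose proof (w_fresh c) as F. eapply freshb_spec in F; [| apply (H_w c a); lia].
    apply F. symmetry. exact Heq. }
  intros Heq. destruct (Nat.lt_total n m) as [Hl|[He|Hl]]; auto.
  - exfalso. eapply K; eauto.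
  - exfalso. eapply K; eauto. symmetry; auto.
Qed.

Lemma growth N0 (Hg : forall N, (N0 <= N)%nat -> Q2R (w N) + D N - (/2)^N < Q2R (w (S N))) :
  forall k, Q2R (w N0) + sumD D N0 k - 2*(/2)^N0 + 2*(/2)^(N0+k) <= Q2R (w (N0 + k)).
Proof.
  induction k; simpl.
  - rewrite Nat.add_0_r. lra.
  - specialize (Hg (N0 + k)%nat ltac:(lia)). rewrite Nat.add_succ_r.
    replace ((/2) ^ S (N0 + k)) with ((/2)^(N0+k) * /2) by (simpl; ring). lra.
Qed.

Lemma hit i N0 : (forall j, (j < i)%nat -> exists n, (n <= N0)%nat /\ (w n == enumQ j)%Q) ->
  exists n, (w n == enumQ i)%Q.
Proof.
  intros Hc. apply NNPP. intros Hno.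
  assert (Hno' : forall n, ~ (w n == enumQ i)%Q) by (intros n Hn; apply Hno; eauto).
  assert (T : forall N, (N0 <= N)%nat -> target (Hs N) = i).
  { intros N HN. destruct (target_spec (Hs N)) as [T1 T2].
    assert (Fi : freshb (Hs N) (enumQ i) = true).
    { apply freshb_intro. intros y Hy Heq. destruct (H_inv N y Hy) as [m [_ ->]].
      apply (Hno' m). symmetry; auto. }
    specialize (T2 i Fi).
    destruct (Nat.eq_dec (target (Hs N)) i) as [E|E]; auto.
    destruct (Hc (target (Hs N)) ltac:(lia)) as [n [Hn Heq]].
    eapply freshb_spec in T1; [| apply (H_w N n); lia]. exfalso; apply T1. symmetry; auto. }
  assert (Hb : forall N, (N0 <= N)%nat ->
     Q2R (w N) + D N < Q2R (enumQ i) /\ Q2R (w N) + D N - (/2)^N < Q2R (w (S N))).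
  { intros N HN. pose proof (w_S N) as E. unfold next in E. rewrite (T N HN) in E.
    fold (w N) in E. destruct Rle_dec as [Hl|Hl].
    - exfalso. apply (Hno' (S N)). rewrite E. reflexivity.
    - pose proof (half_pow_pos N).
      destruct (pick_spec (Q2R (w N) + D N - (/2)^N) (Q2R (w N) + D N) (Hs N)) as [[H1 _] _]; [lra|].
      rewrite <- E in H1. split; lra. }
  pose proof (growth N0 (fun N HN => proj2 (Hb N HN))) as G.
  destruct (Ddiv N0 (Q2R (enumQ i) - Q2R (w N0) + 2)) as [k Hk].
  specialize (G (S k)). simpl in G.
  pose proof (half_pow_pos (N0 + S k)). pose proof (Dpos (N0 + k)%nat).
  assert ((/2)^N0 <= 1).
  { clear. induction N0; simpl; lra. }
  destruct (Hb (N0 + k)%nat ltac:(lia)) as [B1 _].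
  pose proof (w_step (N0 + k)). rewrite Nat.add_succ_r in G. pose proof (half_pow_pos (S (N0 + k))). lra.
Qed.

Lemma cover i : exists N0, forall j, (j < i)%nat -> exists n, (n <= N0)%nat /\ (w n == enumQ j)%Q.
Proof.
  induction i.
  - exists 0%nat. intros; lia.
  - destruct IHi as [N0 HN0]. destruct (hit i N0 HN0) as [n Hn].
    exists (Nat.max N0 n). intros j Hj. destruct (Nat.eq_dec j i).
    + subst. exists n. split; auto; lia.
    + destruct (HN0 j ltac:(lia)) as [m [? ?]]. exists m. split; auto; lia.
Qed.

Lemma w_surj q : exists n, (w n == q)%Q.
Proof.
  destruct (enumQ_surj q) as [i Hi]. destruct (cover (S i)) as [N0 HN0].
  destruct (HN0 i ltac:(lia)) as [n [_ Hn]]. exists n. rewrite Hn, Hi. reflexivity.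
Qed.

End Walk.

Section Main.
Variable f : nat -> R.
Hypothesis f_nonneg : forall n : nat, (1 <= n)%nat -> (0 <= f n)%R.
Hypothesis f_nondecr : forall n : nat, (1 <= n)%nat -> (f n <= f (S n))%R.
Hypothesis f_div : cv_infty (partial_sum_f_over_n2 f).

Definition Df (n : nat) : R := f (n + 2) / (2 * INR (n + 2) * INR (n + 1)).

Lemma INR_pos n : 0 < INR (S n).
Proof. apply lt_0_INR. lia. Qed.

Lemma Df_pos n : 0 <= Df n.
Proof.
  unfold Df. pose proof (f_nonneg (S (S n)) ltac:(lia)).
  replace (n+2)%nat with (S (S n)) by lia. replace (n+1)%nat with (S n) by lia.
  pose proof (INR_pos n). pose proof (INR_pos (S n)).
  apply Rmult_le_pos; auto. left. apply Rinv_0_lt_compat. nra.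
Qed.

Lemma sumS g n : sum_f_R0 g (S n) = sum_f_R0 g n + g (S n).
Proof. reflexivity. Qed.

Lemma Df_sum n0 k : (partial_sum_f_over_n2 f (n0 + k) - partial_sum_f_over_n2 f n0) / 2 <= sumD Df n0 k.
Proof.
  induction k; cbn [sumD].
  - rewrite Nat.add_0_r. lra.
  - rewrite Nat.add_succ_r. unfold partial_sum_f_over_n2 in *.
    rewrite (sumS (fun k0 => f (S k0) / INR (S k0) ^ 2)).
    unfold Df in *. replace (n0 + k + 2)%nat with (S (S (n0 + k))) by lia.
    replace (n0 + k + 1)%nat with (S (n0 + k)) by lia.
    set (F := f (S (S (n0 + k)))). 
    assert (HF : 0 <= F) by (apply f_nonneg; lia).
    set (x := INR (S (n0+k))). assert (Hx : 0 < x) by apply INR_pos.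
    replace (INR (S (S (n0 + k)))) with (x + 1) by (unfold x; rewrite (S_INR (S (n0+k))); reflexivity).
    assert (F / (x+1)^2 / 2 <= F / (2 * (x + 1) * x)).
    { unfold Rdiv. rewrite Rmult_assoc. rewrite <- Rinv_mult.
      apply Rmult_le_compat_l; auto. apply Rinv_le_contravar; nra. }
    lra.
Qed.

Lemma Df_div n0 M : exists k, M < sumD Df n0 k.
Proof.
  destruct (f_div (2 * M + partial_sum_f_over_n2 f n0)) as [N HN].
  exists N. specialize (HN (n0 + N)%nat ltac:(lia)). pose proof (Df_sum n0 N). lra.
Qed.

Notation u := (w Df).

Lemma claim a k : Q2R (u (a + k)) - Q2R (u a) <=
   f (a + k + 1) / 2 * (/ INR (a + 1) - / INR (a + k + 1)).
Proof.
  induction k.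
  - rewrite Nat.add_0_r. rewrite !Rminus_diag. rewrite Rmult_0_r. lra.
  - pose proof (w_step Df (a + k)) as St. rewrite Nat.add_succ_r.
    assert (HD : Df (a + k) = f (S (S (a + k))) / (2 * INR (S (S (a + k))) * INR (S (a + k)))).
    { unfold Df. replace (a + k + 2)%nat with (S (S (a + k))) by lia.
      replace (a + k + 1)%nat with (S (a + k)) by lia. reflexivity. }
    rewrite HD in St.
    replace (S (a + k) + 1)%nat with (S (S (a + k))) by lia.
    replace (a + k + 1)%nat with (S (a + k)) in IHk by lia.
    pose proof (f_nondecr (S (a + k)) ltac:(lia)) as Mon.
    set (F1 := f (S (a + k))) in *. set (F2 := f (S (S (a + k)))) in *.
    set (A := INR (a + 1)) in *. set (B := INR (S (a + k))) in *.
    assert (HA : 0 < A) by (unfold A; replace (a+1)%nat with (S a) by lia; apply INR_pos).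
    assert (HAB : A <= B) by (unfold A, B; apply le_INR; lia).
    replace (INR (S (S (a + k)))) with (B + 1) in * by (unfold B; rewrite (S_INR (S (a+k))); reflexivity).
    assert (HX : 0 <= / A - / B) by (assert (/ B <= / A) by (apply Rinv_le_contravar; lra); lra).
    assert (E : / B - / (B + 1) = / (B * (B + 1))) by (field; lra).
    assert (E2 : F2 / (2 * (B + 1) * B) = F2 / 2 * / (B * (B + 1))).
    { field; lra. }
    assert (F1 / 2 * (/ A - / B) <= F2 / 2 * (/ A - / B)) by (apply Rmult_le_compat_r; lra).
    replace (F2 / 2 * (/ A - / (B + 1))) with (F2 / 2 * (/ A - / B) + F2 / 2 * (/ B - / (B + 1))) by ring.
    rewrite E. lra.
Qed.

Definition bseq (n : nat) : Q := (inject_Z (Z.of_nat n) * u (n - 1))%Q.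

Lemma Q2R_injZ_nat n : Q2R (inject_Z (Z.of_nat n)) = INR n.
Proof. unfold Q2R, inject_Z; simpl. rewrite INR_IZR_INZ. field. Qed.

Lemma Q2R_b n : Q2R (bseq n) = INR n * Q2R (u (n - 1)).
Proof. unfold bseq. rewrite Q2R_mult, Q2R_injZ_nat. reflexivity. Qed.

Lemma ratio_b n : (1 <= n)%nat -> (ratio bseq n == u (n - 1))%Q.
Proof.
  intros Hn. unfold ratio, bseq. field.
  unfold Qeq; simpl. lia.
Qed.

Lemma b_ineq n m : (1 <= n)%nat -> (1 <= m)%nat ->
  Q2R (bseq (n + m)%nat) <= Q2R (bseq n) + Q2R (bseq m) + f (n + m)%nat.
Proof.
  intros Hn Hm. destruct n as [|a]; [lia|]. destruct m as [|c]; [lia|].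
  rewrite !Q2R_b.
  replace (S a + S c - 1)%nat with (a + S c)%nat by lia.
  replace (S a - 1)%nat with a by lia. replace (S c - 1)%nat with c by lia.
  pose proof (claim a (S c)) as C1. pose proof (claim c (S a)) as C2.
  replace (c + S a)%nat with (a + S c)%nat in C2 by lia.
  replace (a + S c + 1)%nat with (S a + S c)%nat in C1, C2 by lia.
  replace (a + 1)%nat with (S a) in C1 by lia.
  replace (c + 1)%nat with (S c) in C2 by lia.
  pose proof (f_nonneg (S a + S c) ltac:(lia)) as HF.
  rewrite plus_INR in *.
  set (F := f (S a + S c)) in *. set (P := INR (S a)) in *. set (R0 := INR (S c)) in *.
  set (U := Q2R (u (a + S c))) in *. set (Ua := Q2R (u a)) in *. set (Uc := Q2R (u c)) in *.
  assert (HP : 0 < P) by apply INR_pos. assert (HR : 0 < R0) by apply INR_pos.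
  apply (Rmult_le_compat_l P) in C1; [|lra]. apply (Rmult_le_compat_l R0) in C2; [|lra].
  assert (Eq : P * (F / 2 * (/ P - / (P + R0))) + R0 * (F / 2 * (/ R0 - / (P + R0))) = F / 2).
  { field. lra. }
  nra.
Qed.

Theorem final : exists b : nat -> Q,
    (forall n m : nat, (1 <= n)%nat -> (1 <= m)%nat ->
       (Q2R (b (n + m)%nat) <= Q2R (b n) + Q2R (b m) + f (n + m)%nat)%R) /\
    (forall q : Q, exists n : nat, (1 <= n)%nat /\ (ratio b n == q)%Q) /\
    (forall n m : nat, (1 <= n)%nat -> (1 <= m)%nat ->
       (ratio b n == ratio b m)%Q -> n = m).
Proof.
  exists bseq. split; [exact b_ineq|split].
  - intros q. destruct (w_surj Df Df_pos Df_div q) as [k Hk]. exists (S k). split; [lia|].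
    rewrite ratio_b by lia. replace (S k - 1)%nat with k by lia. exact Hk.
  - intros n m Hn Hm Heq. rewrite !ratio_b in Heq by lia.
    apply w_inj in Heq. lia.
Qed.

End Main.

Theorem theorem5p6 (f : nat -> R)
  (f_nonneg : forall n : nat, (1 <= n)%nat -> (0 <= f n)%R)
  (f_nondecr : forall n : nat, (1 <= n)%nat -> (f n <= f (S n))%R)
  (f_div : cv_infty (partial_sum_f_over_n2 f)) :
  exists b : nat -> Q,
    (forall n m : nat, (1 <= n)%nat -> (1 <= m)%nat ->
       (Q2R (b (n + m)%nat) <= Q2R (b n) + Q2R (b m) + f (n + m)%nat)%R) /\
    (forall q : Q, exists n : nat, (1 <= n)%nat /\ (ratio b n == q)%Q) /\
    (forall n m : nat, (1 <= n)%nat -> (1 <= m)%nat ->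
       (ratio b n == ratio b m)%Q -> n = m).
Proof. exact (final f f_nonneg f_nondecr f_div). Qed.
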